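(* Let $P\subseteq S_n$ be a permutation array with ${\rm hd}(P)=d$ and $|P^{\sf CT}|\ge 2$. Then ${\rm hd}(P^{\sf CT})>{\rm hd}(P)$ if and only if both of the following hold: (1) any $\sigma,\tau\in P$ with ${\rm hd}(\sigma,\tau)=d$ satisfy $\sigma^{\sf CT}=\tau^{\sf CT}$; and (2) any $\sigma,\tau\in P$ with ${\rm hd}(\sigma,\tau)>d$ satisfy ${\rm hd}(\sigma^{\sf CT},\tau^{\sf CT})>d$ or $\sigma^{\sf CT}=\tau^{\sf CT}$.
   Context: $S_n$ is the symmetric group on $\{0,1,\ldots,n-1\}$. A permutation array is a non-empty subset $P\subseteq S_n$. ${\rm hd}(\sigma,\tau)=|\{x:\sigma(x)\neq\tau(x)\}|$ and ${\rm hd}(P)=\min\{{\rm hd}(\sigma,\tau):\sigma,\tau\in P,\ \sigma\neq\tau\}$. The contraction of $\sigma\in S_n$ is $\sigma^{\sf CT}\in S_{n-1}$ (on $\{0,\ldots,n-2\}$) defined by $\sigma^{\sf CT}(x)=\sigma(n-1)$ if $x=\sigma^{-1}(n-1)$ and $\sigma^{\sf CT}(x)=\sigma(x)$ otherwise (i.e. delete $n-1$ from the cycle notation of $\sigma$); $P^{\sf CT}=\{\sigma^{\sf CT}:\sigma\in P\}$. *)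

(* Defs.v *)
From mathcomp Require Import all_boot all_fingroup.
Set Implicit Arguments. Unset Strict Implicit. Unset Printing Implicit Defensive.

(* S_k is {perm 'I_k}; a permutation array is a nonempty {set {perm 'I_k}}. *)

Definition hd (k : nat) (s t : {perm 'I_k}) : nat := #|[pred x | s x != t x]|.

(* hd(P) = min over distinct pairs (junk value k if |P| < 2, never used) *)
Definition hdP (k : nat) (P : {set {perm 'I_k}}) : nat :=
  \big[minn/k]_(s in P) \big[minn/k]_(t in P | t != s) hd s t.

Section Contraction.
Variable n : nat.
Implicit Types (s : {perm 'I_n.+1}) (x : 'I_n).

(* sigma^CT(x) = sigma(n) if sigma(x) = n, else sigma(x)  (here n-1 of the paper is ord_max) *)
Definition ct_val s x : nat :=
  let y := s (widen_ord (leqnSn n) x) in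
  if y == ord_max then val (s ord_max) else val y.

Lemma ct_val_lt s x : ct_val s x < n.
Proof.
rewrite /ct_val; set w := widen_ord _ x.
have wM : w != ord_max by rewrite -val_eqE /= neq_ltn ltn_ord.
case: ifP => [/eqP E|/negbT ne].
  have : s ord_max != ord_max.
    apply/eqP => E2; move: wM; have : s w = s ord_max by rewrite E E2.
    by move/perm_inj => ->; rewrite eqxx.
  by rewrite -val_eqE /= => H; have := ltn_ord (s ord_max); rewrite ltnS leq_eqVlt (negbTE H).
have := ltn_ord (s w); rewrite ltnS leq_eqVlt; move: ne; rewrite -val_eqE /= => ne.
by rewrite (negbTE ne).
Qed.

Definition ct_fun s x : 'I_n := Ordinal (ct_val_lt s x).

Lemma ct_fun_inj s : injective (ct_fun s).
Proof.
move=> x1 x2 /(congr1 val); rewrite /= /ct_val.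
set a := widen_ord _ x1; set b := widen_ord _ x2.
have ab : a = b -> x1 = x2 by move/(congr1 val) => /= h; apply/val_inj.
have aM : a != ord_max by rewrite -val_eqE /= neq_ltn ltn_ord.
have bM : b != ord_max by rewrite -val_eqE /= neq_ltn ltn_ord.
case: ifP => [/eqP Ea|_]; case: ifP => [/eqP Eb|_].
- by move=> _; apply: ab; apply: (@perm_inj _ s); rewrite Ea Eb.
- move/val_inj/perm_inj => E; by move: bM; rewrite -E eqxx.
- move/val_inj/perm_inj => E; by move: aM; rewrite E eqxx.
- by move/val_inj/perm_inj.
Qed.

Definition ct s : {perm 'I_n} := perm (@ct_fun_inj s).

Definition ctset (P : {set {perm 'I_n.+1}}) : {set {perm 'I_n}} :=
  [set ct s | s in P].

End Contraction.

(* Main.v *)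
Require Import Defs.
From mathcomp Require Import all_boot all_fingroup.
Set Implicit Arguments. Unset Strict Implicit. Unset Printing Implicit Defensive.

Lemma ctE n (s : {perm 'I_n.+1}) x :
  val (ct s x) = (let y := s (widen_ord (leqnSn n) x) in
  if y == ord_max then val (s ord_max) else val y).
Proof. by rewrite /ct permE. Qed.

Lemma hd_ct n (s t : {perm 'I_n.+1}) : hd (ct s) (ct t) <= hd s t.
Proof.
rewrite /hd.
pose w := widen_ord (leqnSn n).
pose f (x : 'I_n) := if s (w x) == t (w x) then ord_max else w x.
have wM x : w x != ord_max by rewrite -val_eqE /= neq_ltn ltn_ord.
have winj : injective w by move=> a b /(congr1 val) /= h; apply/val_inj.
have key x : ct s x != ct t x -> s (w x) == t (w x) -> s (w x) = ord_max.
  move=> H E; apply/eqP; apply: contraR H => H; apply/eqP/val_inj.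
  by rewrite !ctE /= -/(w x) -(eqP E) (negbTE H).
set D' := [pred x | _]; set D := [pred x | _].
have -> : #|D'| = #|f @: D'|.
  rewrite card_in_imset // => a b; rewrite !inE /f => Ha Hb.
  case: ifP => Ea; case: ifP => Eb.
  - move=> _; apply: winj; apply: (@perm_inj _ s).
    by rewrite (key _ Ha Ea) (key _ Hb Eb).
  - by move=> E; move: (wM b); rewrite -E eqxx.
  - by move=> E; move: (wM a); rewrite E eqxx.
  - exact: winj.
apply: subset_leq_card; apply/subsetP => y /imsetP [x Hx ->].
rewrite !inE /f; move: Hx; rewrite inE => Hx.
case: ifP => E; last by rewrite E.
apply: contra Hx => /eqP Em; apply/eqP/val_inj.
by rewrite !ctE /= -/(w x) -(eqP E) Em.
Qed.

Lemma bigmin_le_seq (I : eqType) (r : seq I) (Pr : pred I) (F : I -> nat) k i :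
  i \in r -> Pr i -> \big[minn/k]_(j <- r | Pr j) F j <= F i.
Proof.
elim: r => // a r IH; rewrite inE big_cons => /orP [/eqP <-|ir] Pi.
  by rewrite Pi geq_min leqnn.
case: ifP => _; last exact: IH.
by rewrite geq_min IH // orbT.
Qed.

Lemma bigmin_le (T : finType) (A : pred T) (F : T -> nat) k i :
  A i -> \big[minn/k]_(j | A j) F j <= F i.
Proof. by move=> Ai; apply: bigmin_le_seq => //; rewrite mem_index_enum. Qed.

Lemma bigmin_cases (T : finType) (A : pred T) (F : T -> nat) k :
  let v := \big[minn/k]_(j | A j) F j in v = k \/ exists2 i, A i & v = F i.
Proof.
apply: (big_ind (fun x => x = k \/ exists2 i, A i & x = F i)).
- by left.
- move=> x y Hx Hy; rewrite /minn; case: ifP => _; [exact Hx|exact Hy].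
- by move=> i Ai; right; exists i.
Qed.

Lemma hd_le k (s t : {perm 'I_k}) : hd s t <= k.
Proof. by rewrite /hd; apply: leq_trans (max_card _) _; rewrite card_ord. Qed.

Lemma hdP_le k (P : {set {perm 'I_k}}) s t :
  s \in P -> t \in P -> t != s -> hdP P <= hd s t.
Proof.
move=> sP tP ts; rewrite /hdP.
apply: leq_trans (bigmin_le _ _ sP) _.
by apply: bigmin_le => /=; rewrite tP ts.
Qed.

Lemma hdP_att k (P : {set {perm 'I_k}}) s0 t0 :
  s0 \in P -> t0 \in P -> t0 != s0 ->
  exists s t, [/\ s \in P, t \in P, t != s & hdP P = hd s t].
Proof.
move=> sP tP ts.
have Hle := hdP_le sP tP ts.
have [E|[s Hs E]] := bigmin_cases (fun s => s \in P)
   (fun s => \big[minn/k]_(t in P | t != s) hd s t) k.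
- exists s0, t0; split => //; apply/eqP; rewrite eqn_leq Hle /=.
  by rewrite /hdP E hd_le.
- have [E2|[t Ht E2]] := bigmin_cases (fun t => (t \in P) && (t != s)) (hd s) k.
  + exists s0, t0; split => //; apply/eqP; rewrite eqn_leq Hle /=.
    by rewrite /hdP E E2 hd_le.
  + move/andP: Ht => [Ht1 Ht2].
    by exists s, t; split => //; rewrite /hdP E E2.
Qed.

Theorem theorem3p3 (n d : nat) (P : {set {perm 'I_n.+1}}) :
  P != set0 -> hdP P = d -> 1 < #|ctset P| ->
  (hdP P < hdP (ctset P) <->
   ((forall s t, s \in P -> t \in P -> hd s t = d -> ct s = ct t) /\
    (forall s t, s \in P -> t \in P -> d < hd s t ->
       d < hd (ct s) (ct t) \/ ct s = ct t))).
Proof.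
move=> _ Hd /card_gt1P [u0 [v0 [u0P v0P uv0]]].
rewrite Hd; split.
- move=> H; split.
  + move=> s t sP tP Est; apply/eqP; apply: contraLR H => ne.
    rewrite -leqNgt -Est; apply: leq_trans (hd_ct s t).
    by apply: hdP_le; rewrite ?(imset_f (@ct n)) // eq_sym.
  + move=> s t sP tP _; case: (eqVneq (ct s) (ct t)) => [->|ne]; [by right|left].
    apply: leq_trans H _; apply: hdP_le; rewrite ?(imset_f (@ct n)) //.
    by rewrite eq_sym.
- move=> [H1 H2].
  have vu0 : v0 != u0 by rewrite eq_sym.
  have [u [v [uP vP vu ->]]] := hdP_att u0P v0P vu0.
  move: uP vP vu => /imsetP [s sP ->] /imsetP [t tP ->] vu.
  have ts : t != s by apply: contra vu => /eqP ->.
  have := hdP_le sP tP ts; rewrite Hd leq_eqVlt => /orP [/eqP E|lt].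
    by move: vu; rewrite (H1 s t sP tP (esym E)) eqxx.
  case: (H2 s t sP tP lt) => // E.
  by move: vu; rewrite E eqxx.
Qed.
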